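(* For every $t\ge0$, $k\ge1$, every collection $\Omega$ of functions and every collection $\Theta$ of aggregation functions: (1) $\rho_1\bigl(\mathsf{cr}^{(t)}\bigr)\subseteq\rho_1\bigl(\mathsf{GTL}_2^{(t)}(\Omega,\Theta)\bigr)$; (2) $\rho_1\bigl(\mathsf{vwl}_k^{(t)}\bigr)\subseteq\rho_1\bigl(\mathsf{TL}_{k+1}^{(t)}(\Omega,\Theta)\bigr)$; (3) $\rho_0\bigl(\mathsf{gwl}_k^{(t)}\bigr)\subseteq\rho_0\bigl(\mathsf{TL}_{k+1}^{(t+1)}(\Omega,\Theta)\bigr)$.
   Context: Fix integers $n\ge1$, $\ell\ge1$. A graph is $G=(V_G,E_G,\mathrm{col}_G)$ with $V_G=[n]$, $E_G$ a set of unordered pairs of distinct vertices, $\mathrm{col}_G:V_G\to\mathbb R^\ell$; $N_G(v)=\{u:uv\in E_G\}$. Extended tensor language $\mathsf{TL}(\Omega,\Theta)$: $\Omega$ is a collection of functions $f:\mathbb R^p\to\mathbb R$; $\Theta$ a collection of aggregation functions $F$, each assigning a real number to every finite multiset of reals. Expressions: $\varphi::=\mathbf 1_{x=y}\mid \mathbf 1_{x\neq y}\mid E(x,y)\mid P_s(x)\mid \varphi\cdot\varphi\mid \varphi+\varphi\mid a\cdot\varphi\mid f(\varphi_1,\dots,\varphi_p)\mid \sum_x\varphi\mid \mathrm{aggr}^F_{x_j}(\varphi)\mid\mathrm{aggr}^F_{x_j}(\varphi\mid E(x_i,x_j))$ with $F\in\Theta$, where in the last construct $\varphi$ has no free variable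 other than $x_j$. Free variables as usual, with $\mathrm{free}(\mathrm{aggr}^F_{x_j}(\varphi))=\mathrm{free}(\varphi)\setminus\{x_j\}$ and $\mathrm{free}(\mathrm{aggr}^F_{x_j}(\varphi\mid E(x_i,x_j)))=\{x_i\}$. Semantics: $E$ adjacency indicator, $P_s(x)=\mathrm{col}_G(\nu(x))_s$, $\mathbf 1_{x\,\mathrm{op}\,y}$ (dis)equality indicator, $\cdot,+,a\cdot,f$ pointwise, $[\![\sum_x\varphi]\!]^\nu_G=\sum_{v\in V_G}[\![\varphi]\!]^{\nu[x\mapsto v]}_G$, $[\![\mathrm{aggr}^F_{x_j}(\varphi)]\!]^\nu_G=F(\{\!\{[\![\varphi]\!]^{\nu[x_j\mapsto v]}_G:v\in V_G\}\!\})$, $[\![\mathrm{aggr}^F_{x_j}(\varphi\mid E(x_i,x_j))]\!]^\nu_G=F(\{\!\{[\![\varphi]\!]^{\nu[x_j\mapsto v]}_G:v\in N_G(\nu(x_i))\}\!\})$. Aggregation depth: $0$ for atoms, max for $\cdot,+,f(\dots)$, unchanged by $a\cdot$, and $+1$ for $\sum_x$ and both aggregation constructs. $\mathsf{TL}_{k}^{(t)}(\Omega,\Theta)$: expressions using only variables $x_1,\dots,x_k$ (re-binding allowed) with aggregation depth $\le t$. Guarded fragment $\mathsf{GTL}_2(\Omega,\Theta)$: expressions with exactly one free variable ($x_1$ or $x_2$), built from $\mathbf 1_{x_i=x_i}$, $\mathbf 1_{x_i\ne x_i}$, $P_s(x_i)$ by $\cdot$, $+$ of expressions with the same single free variable,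 $a\cdot$, $f(\varphi_1,\dots,\varphi_p)$ with all $\varphi_j$ sharing the same single free variable, $\sum_{x_j}(E(x_i,x_j)\cdot\varphi)$ and $\mathrm{aggr}^F_{x_j}(\varphi\mid E(x_i,x_j))$ with $\{i,j\}=\{1,2\}$ and $\varphi$ with free variable $x_j$; $\mathsf{GTL}_2^{(t)}(\Omega,\Theta)$ those of aggregation depth $\le t$. For a set $\mathcal L$ of expressions, $\rho_1(\mathcal L)$ is the set of pairs $((G,v),(H,w))$ with $[\![\varphi]\!]^{x_1\mapsto v}_G=[\![\varphi]\!]^{x_1\mapsto w}_H$ for all $\varphi\in\mathcal L$ with free variables among $\{x_1\}$; $\rho_0(\mathcal L)$ the set of pairs of graphs agreeing on all closed expressions of $\mathcal L$. Color refinement: $\mathsf{cr}^{(0)}(G,v)=\mathrm{col}_G(v)$, $\mathsf{cr}^{(t+1)}(G,v)=(\mathsf{cr}^{(t)}(G,v),\{\!\{\mathsf{cr}^{(t)}(G,u):u\in N_G(v)\}\!\})$. $k$-WL: $\mathsf{atp}_k(G,\mathbf v)$ records for $i<j$ whether $v_i=v_j$ and whether $v_iv_j\in E_G$, and all $\mathrm{col}_G(v_i)$; $\mathsf{wl}_k^{(0)}=\mathsf{atp}_k$, $\mathsf{wl}_k^{(t+1)}(G,\mathbf v)=(\mathsf{wl}_k^{(t)}(G,\mathbf v),\{\!\{(\mathsf{atp}_{k+1}(G,(v_1,\dots,v_k,u)),\mathsf{wl}_k^{(t)}(G,\mathbf v[u/1]),\dots,\mathsf{wl}_k^{(t)}(G,\mathbf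 v[u/k])):u\in V_G\}\!\})$ ($\mathbf v[u/i]$ replaces the $i$-th entry by $u$); $\mathsf{vwl}_k^{(t)}(G,v)=\mathsf{wl}_k^{(t)}(G,(v,\dots,v))$; $\mathsf{gwl}_k^{(t)}(G)=\{\!\{\mathsf{wl}_k^{(t)}(G,\mathbf v):\mathbf v\in V_G^k\}\!\}$. Labels compared as formal objects; $\rho_1(\mathsf{cr}^{(t)})$, $\rho_1(\mathsf{vwl}_k^{(t)})$, $\rho_0(\mathsf{gwl}_k^{(t)})$ are the pairs with equal labels. *)

(* Defs.v *)
From Stdlib Require Import Reals.
From HB Require Import structures.
From mathcomp Require Import all_boot all_order.
From mathcomp Require Import finmap multiset.
From mathcomp Require Import Rstruct.

Set Implicit Arguments.
Unset Strict Implicit.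
Unset Printing Implicit Defensive.
Open Scope mset_scope.
Open Scope nat_scope.

Record graph (n l : nat) := Graph {
  adj : rel 'I_n;
  adj_sym : symmetric adj;
  adj_irr : irreflexive adj;
  col : 'I_n -> {ffun 'I_l -> R}
}.

Definition rmset := {mset R}.

Section TL.
Variable l : nat.

(* Variables are natural numbers; x_i is represented by i (paper: x_1, x_2, ...). *)
Inductive expr :=
| EEq   (i j : nat)
| ENeq  (i j : nat)
| EE    (i j : nat)
| EP    (s : 'I_l) (i : nat)
| EMul  (e1 e2 : expr)
| EAdd  (e1 e2 : expr)
| EScale (a : R) (e : expr)
| EApp  (p : nat) (f : ('I_p -> R) -> R) (args : 'I_p -> expr)
| ESum  (x : nat) (e : expr)
| EAggr (F : rmset -> R) (j : nat) (e : expr)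
| EAggrN (F : rmset -> R) (i j : nat) (e : expr).    (* aggr^F_{x_j}(e | E(x_i,x_j)) *)

Fixpoint free (e : expr) (x : nat) : bool :=
  match e with
  | EEq i j | ENeq i j | EE i j => (x == i) || (x == j)
  | EP _ i => x == i
  | EMul a b | EAdd a b => free a x || free b x
  | EScale _ a => free a x
  | EApp p _ args => [exists m : 'I_p, free (args m) x]
  | ESum y a => (x != y) && free a x
  | EAggr _ j a => (x != j) && free a x
  | EAggrN _ i _ _ => x == i
  end.

Fixpoint vars_in (k : nat) (e : expr) : bool :=
  let ok i := (0 < i <= k) in
  match e with
  | EEq i j | ENeq i j | EE i j => ok i && ok j
  | EP _ i => ok i
  | EMul a b | EAdd a b => vars_in k a && vars_in k b
  | EScale _ a => vars_in k a
  | EApp p _ args => [forall m : 'I_p, vars_in k (args m)]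
  | ESum y a => ok y && vars_in k a
  | EAggr _ j a => ok j && vars_in k a
  | EAggrN _ i j a => [&& ok i, ok j & vars_in k a]
  end.

Fixpoint depth (e : expr) : nat :=
  match e with
  | EEq _ _ | ENeq _ _ | EE _ _ | EP _ _ => 0
  | EMul a b | EAdd a b => maxn (depth a) (depth b)
  | EScale _ a => depth a
  | EApp p _ args => \max_(m < p) depth (args m)
  | ESum _ a | EAggr _ _ a | EAggrN _ _ _ a => (depth a).+1
  end.

Fixpoint in_TL (Omega : forall p : nat, (('I_p -> R) -> R) -> Prop)
    (Theta : (rmset -> R) -> Prop) (e : expr) : Prop :=
  match e with
  | EEq _ _ | ENeq _ _ | EE _ _ | EP _ _ => True
  | EMul a b | EAdd a b => in_TL Omega Theta a /\ in_TL Omega Theta b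
  | EScale _ a => in_TL Omega Theta a
  | EApp p f args => Omega p f /\ forall m : 'I_p, in_TL Omega Theta (args m)
  | ESum _ a => in_TL Omega Theta a
  | EAggr F _ a => Theta F /\ in_TL Omega Theta a
  | EAggrN F _ j a => Theta F /\ (forall x, free a x -> x = j) /\ in_TL Omega Theta a
  end.

Definition TL (Omega : forall p : nat, (('I_p -> R) -> R) -> Prop)
    (Theta : (rmset -> R) -> Prop) (k t : nat) (e : expr) : Prop :=
  in_TL Omega Theta e /\ vars_in k e /\ (depth e <= t)%N.

(* Guarded fragment GTL_2(Omega, Theta): gtl i e means e is a guarded
   expression whose single free variable is x_i (i in {1,2}). *)
Inductive gtl (Omega : forall p : nat, (('I_p -> R) -> R) -> Prop)
    (Theta : (rmset -> R) -> Prop) : nat -> expr -> Prop :=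
| gtl_eq i : (i == 1) || (i == 2) -> gtl Omega Theta i (EEq i i)
| gtl_neq i : (i == 1) || (i == 2) -> gtl Omega Theta i (ENeq i i)
| gtl_P s i : (i == 1) || (i == 2) -> gtl Omega Theta i (EP s i)
| gtl_mul i a b : gtl Omega Theta i a -> gtl Omega Theta i b -> gtl Omega Theta i (EMul a b)
| gtl_add i a b : gtl Omega Theta i a -> gtl Omega Theta i b -> gtl Omega Theta i (EAdd a b)
| gtl_scale i c a : gtl Omega Theta i a -> gtl Omega Theta i (EScale c a)
| gtl_app i p f args : (0 < p)%N -> Omega p f ->
    (forall m : 'I_p, gtl Omega Theta i (args m)) -> gtl Omega Theta i (EApp f args)
| gtl_sum i j a : ((i == 1) && (j == 2)) || ((i == 2) && (j == 1)) ->
    gtl Omega Theta j a -> gtl Omega Theta i (ESum j (EMul (EE i j) a))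
| gtl_aggr i j F a : ((i == 1) && (j == 2)) || ((i == 2) && (j == 1)) ->
    Theta F -> gtl Omega Theta j a -> gtl Omega Theta i (EAggrN F i j a).

Definition GTL2 Omega Theta (t : nat) (e : expr) : Prop :=
  exists i, gtl Omega Theta i e /\ (depth e <= t)%N.

End TL.

Section Semantics.
Variables n l : nat.
Implicit Types (G : graph n l).

Definition upd (nu : nat -> 'I_n) (x : nat) (v : 'I_n) : nat -> 'I_n :=
  fun y => if y == x then v else nu y.

Definition ind (b : bool) : R := if b then R1 else R0.

Fixpoint eval G (nu : nat -> 'I_n) (e : expr l) : R :=
  match e with
  | EEq i j => ind (nu i == nu j)
  | ENeq i j => ind (nu i != nu j)
  | EE i j => ind (adj G (nu i) (nu j))
  | EP s i => col G (nu i) s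
  | EMul a b => Rmult (eval G nu a) (eval G nu b)
  | EAdd a b => Rplus (eval G nu a) (eval G nu b)
  | EScale c a => Rmult c (eval G nu a)
  | EApp p f args => f (fun m => eval G nu (args m))
  | ESum x a => \big[Rplus/R0]_(v : 'I_n) eval G (upd nu x v) a
  | EAggr F j a => F (seq_mset [seq eval G (upd nu j v) a | v : 'I_n])
  | EAggrN F i j a =>
      F (seq_mset [seq eval G (upd nu j v) a | v <- enum 'I_n & adj G (nu i) v])
  end.

Definition rho1 (L : expr l -> Prop) G (v : 'I_n) H (w : 'I_n) : Prop :=
  forall phi, L phi -> (forall x, free phi x -> x = 1%N) ->
  forall nuG nuH : nat -> 'I_n, nuG 1%N = v -> nuH 1%N = w ->
  eval G nuG phi = eval H nuH phi.

Definition rho0 (L : expr l -> Prop) G H : Prop :=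
  forall phi, L phi -> (forall x, ~~ free phi x) ->
  forall nuG nuH : nat -> 'I_n, eval G nuG phi = eval H nuH phi.

Fixpoint crT (t : nat) : choiceType :=
  match t with
  | 0 => {ffun 'I_l -> R}
  | t'.+1 => (crT t' * {mset crT t'})%type
  end.

Fixpoint cr G (t : nat) (v : 'I_n) : crT t :=
  match t as t0 return crT t0 with
  | 0 => col G v
  | t'.+1 => (cr G t' v, seq_mset [seq cr G t' u | u <- enum 'I_n & adj G v u])
  end.

(* atomic type of a tuple (v_1..v_m): for i < j, whether v_i = v_j and
   whether v_i v_j is an edge (entries with i >= j are a dummy value),
   and the colours of all v_i. *)
Definition atpT (m : nat) : choiceType :=
  ({ffun 'I_m * 'I_m -> bool * bool} * {ffun 'I_m -> {ffun 'I_l -> R}})%type.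

Definition atp G (m : nat) (vs : 'I_m -> 'I_n) : atpT m :=
  ([ffun ij : 'I_m * 'I_m =>
      if (ij.1 < ij.2)%N then (vs ij.1 == vs ij.2, adj G (vs ij.1) (vs ij.2))
      else (false, false)],
   [ffun i => col G (vs i)]).

(* (v_1, ..., v_k, u) *)
Definition ext (k : nat) (vs : {ffun 'I_k -> 'I_n}) (u : 'I_n) : 'I_k.+1 -> 'I_n :=
  fun i => if insub (val i) : option 'I_k is Some j then vs j else u.

Definition repl (k : nat) (vs : {ffun 'I_k -> 'I_n}) (u : 'I_n) (i : 'I_k)
  : {ffun 'I_k -> 'I_n} := [ffun j => if j == i then u else vs j].

Fixpoint wlT (k t : nat) : choiceType :=
  match t with
  | 0 => atpT k
  | t'.+1 => (wlT k t' * {mset (atpT k.+1 * {ffun 'I_k -> wlT k t'})})%type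
  end.

Fixpoint wl G (k t : nat) (vs : {ffun 'I_k -> 'I_n}) : wlT k t :=
  match t as t0 return wlT k t0 with
  | 0 => atp G vs
  | t'.+1 => (wl G t' vs,
              seq_mset [seq (atp G (ext vs u), [ffun i => wl G t' (repl vs u i)])
                       | u : 'I_n])
  end.

Definition vwl G (k t : nat) (v : 'I_n) : wlT k t := wl G t [ffun _ => v].

Definition gwl G (k t : nat) : {mset wlT k t} :=
  seq_mset [seq wl G t vs | vs : {ffun 'I_k -> 'I_n}].

End Semantics.

(* Main.v *)
Require Import Defs.
From Stdlib Require Import Reals FunctionalExtensionality.
From mathcomp Require Import all_boot finmap multiset Rstruct.
Set Implicit Arguments.
Unset Strict Implicit.
Open Scope nat_scope.

Lemma perm_rel (A B X Y : eqType) (cG : A -> X) (cH : B -> X) (pG : pred A)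
  (pH : pred B) (fG : A -> Y) (fH : B -> Y) (sG : seq A) (sH : seq B) :
  (forall a b, cG a = cH b -> pG a = pH b /\ (pG a -> fG a = fH b)) ->
  perm_eq (map cG sG) (map cH sH) ->
  perm_eq (map fG (filter pG sG)) (map fH (filter pH sH)).
Proof.
move=> Hr; elim: sG sH => [|a sG IH] sH /=.
  by move/perm_size; rewrite size_map; case: sH.
move=> P.
have : cG a \in map cH sH by rewrite -(perm_mem P) inE eqxx.
case/mapP => b bin Eab.
have Ps := perm_to_rem bin.
have P2 : perm_eq (map cG sG) (map cH (rem b sH)).
  rewrite -(perm_cons (cG a)); apply: (perm_trans P); rewrite Eab.
  exact: (perm_map cH Ps).
have [pE fE] := Hr _ _ Eab.
have IH2 := IH _ P2.
have Q := perm_map fH (perm_filter pH Ps).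
rewrite perm_sym; apply: (perm_trans Q); rewrite perm_sym /=.
rewrite pE; case Eb: (pH b) => /=; last exact IH2.
by rewrite fE ?pE // perm_cons.
Qed.

Section Gen.
Variables n l : nat.

Lemma sum_perm (fG fH : 'I_n -> R) (pG pH : pred 'I_n) :
  perm_eq (map fG (filter pG (enum 'I_n))) (map fH (filter pH (enum 'I_n))) ->
  \big[Rplus/R0]_(v | pG v) fG v = \big[Rplus/R0]_(v | pH v) fH v.
Proof.
have E p f : \big[Rplus/R0]_(v | p v) f v = \big[Rplus/R0]_(x <- map f (filter p (enum 'I_n))) x.
  by rewrite big_map big_filter big_enum_cond.
by move=> P; rewrite !E; apply: perm_big.
Qed.

Lemma atp_eq (G H : graph n l) m (W W' : 'I_m -> 'I_n) : atp G W = atp H W' ->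
  forall a b, (W a == W b) = (W' a == W' b) /\ adj G (W a) (W b) = adj H (W' a) (W' b).
Proof.
rewrite /atp => -[E1 _] a b.
case: (ltngtP a b) => [ab|ba|ab].
- by move/ffunP/(_ (a,b)): E1; rewrite !ffunE /= ab; case=> -> ->.
- move/ffunP/(_ (b,a)): E1; rewrite !ffunE /= ba; case=> E3 E4.
  by rewrite eq_sym E3 eq_sym adj_sym E4 adj_sym.
- have ab' : a = b := val_inj ab; subst b.
  by rewrite !eqxx !adj_irr.
Qed.

Lemma atp_col (G H : graph n l) m (W W' : 'I_m -> 'I_n) : atp G W = atp H W' ->
  forall a, col G (W a) = col H (W' a).
Proof.
rewrite /atp => -[_ E2] a.
by move/ffunP/(_ a): E2; rewrite !ffunE.
Qed.

Lemma wl_atp (G H : graph n l) k d (vs vs' : {ffun 'I_k -> 'I_n}) :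
  wl G d vs = wl H d vs' -> atp G vs = atp H vs'.
Proof. by elim: d => [//|d IH] /= [E _]; exact: IH. Qed.

Lemma cr_col (G H : graph n l) d v w : cr G d v = cr H d w -> col G v = col H w.
Proof. by elim: d => [//|d IH] /= [E _]; exact: IH. Qed.

End Gen.


Section Ext.
Variables n k : nat.
Implicit Types (vs : {ffun 'I_k -> 'I_n}) (u v : 'I_n) (p z : 'I_k.+1).

Definition sw (p z : 'I_k.+1) : 'I_k.+1 :=
  if z == p then ord_max else if z == ord_max then p else z.

Definition nvs (vs : {ffun 'I_k -> 'I_n}) (u : 'I_n) (p : 'I_k.+1) :=
  if insub (val p) : option 'I_k is Some q then repl vs u q else vs.

Lemma ext_max vs u : ext vs u ord_max = u.
Proof. by rewrite /ext insubF //= ltnn. Qed.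

Lemma ext_q vs u (z : 'I_k.+1) (q : 'I_k) : val z = val q -> ext vs u z = vs q.
Proof. move=> E; rewrite /ext (_ : insub (val z) = Some q) //; rewrite E; exact: valK. Qed.

Lemma nvs_max vs u : nvs vs u ord_max = vs.
Proof. by rewrite /nvs insubF //= ltnn. Qed.

Lemma nvs_q vs u (p : 'I_k.+1) (q : 'I_k) : val p = val q -> nvs vs u p = repl vs u q.
Proof. move=> E; rewrite /nvs (_ : insub (val p) = Some q) //; rewrite E; exact: valK. Qed.

Lemma ord_split (z : 'I_k.+1) : z = ord_max \/ exists q : 'I_k, val z = val q.
Proof.
case: (ltngtP z k) => [zk|kz|zk].
- by right; exists (Ordinal zk).
- by have := ltn_ord z; rewrite ltnS leqNgt kz.
- by left; apply: val_inj.
Qed.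

Lemma ext_nvs vs u p v z :
  ext (nvs vs u p) v (sw p z) = if z == p then v else ext vs u z.
Proof.
case: (ord_split p) => [->|[q pq]].
  rewrite nvs_max /sw.
  case: (ord_split z) => [->|[r zr]]; first by rewrite eqxx !ext_max.
  have zm : z != ord_max by rewrite -(inj_eq val_inj) zr /= neq_ltn ltn_ord.
  by rewrite (negbTE zm) !(ext_q _ _ zr).
rewrite (nvs_q _ _ pq) /sw.
case: (eqVneq z p) => [E|zp]; first by rewrite ext_max.
case: (ord_split z) => [E|[r zr]].
  by rewrite E eqxx ext_max (ext_q _ _ pq) ffunE eqxx.
have zm : z != ord_max by rewrite -(inj_eq val_inj) zr /= neq_ltn ltn_ord.
rewrite (negbTE zm) !(ext_q _ _ zr) ffunE.
case: eqP => // rq; subst r.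
by move: zp; rewrite -(inj_eq val_inj) zr pq eqxx.
Qed.

Lemma ext_const (v : 'I_n) z : ext [ffun _ => v] v z = v.
Proof.
case: (ord_split z) => [->|[q zq]]; first by rewrite ext_max.
by rewrite (ext_q _ _ zq) ffunE.
Qed.

Lemma pick_pos (sigma : nat -> 'I_k.+1) (L : seq nat) :
  size L <= k -> exists p : 'I_k.+1, p \notin map sigma L.
Proof.
move=> sL.
case: (pickP (fun p : 'I_k.+1 => p \notin map sigma L)) => [p Hp|H0]; first by exists p.
have : #|'I_k.+1| <= #|map sigma L|.
  apply: subset_leq_card; apply/subsetP => p _.
  by have := H0 p; rewrite /= => /negbFE.
rewrite card_ord => /leq_trans/(_ (card_size _)); rewrite size_map => /leq_trans/(_ sL).
by rewrite ltnn.
Qed.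

End Ext.


Lemma perm_rel0 (A B X Y : eqType) (cG : A -> X) (cH : B -> X)
  (fG : A -> Y) (fH : B -> Y) (sG : seq A) (sH : seq B) :
  (forall a b, cG a = cH b -> fG a = fH b) ->
  perm_eq (map cG sG) (map cH sH) -> perm_eq (map fG sG) (map fH sH).
Proof.
move=> Hr P.
have := perm_rel (pG := xpredT) (pH := xpredT) (fG := fG) (fH := fH) _ P.
rewrite !filter_predT; apply=> a b E; split=> // _; exact: Hr.
Qed.

Lemma sum_perm0 n (fG fH : 'I_n -> R) :
  perm_eq (map fG (enum 'I_n)) (map fH (enum 'I_n)) ->
  \big[Rplus/R0]_(v : 'I_n) fG v = \big[Rplus/R0]_(v : 'I_n) fH v.
Proof.
move=> P; have := sum_perm (fG := fG) (fH := fH) (pG := xpredT) (pH := xpredT).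
rewrite !filter_predT; apply; exact: P.
Qed.

Section Inv.
Variables n l k : nat.
Hypothesis Hk : 0 < k.
Variable Omega : forall p : nat, (('I_p -> R) -> R) -> Prop.
Variable Theta : (rmset -> R) -> Prop.
Implicit Types (G H : graph n l) (vs : {ffun 'I_k -> 'I_n}) (u v : 'I_n).

Definition Rel d G vs u H vs' u' :=
  [/\ atp G (ext vs u) = atp H (ext vs' u'), wl G d vs = wl H d vs'
    & forall i, wl G d (repl vs u i) = wl H d (repl vs' u' i)].

Definition Tup G d vs v := (atp G (ext vs v), [ffun i => wl G d (repl vs v i)]).

Lemma wl_perm G H d vs vs' : wl G d.+1 vs = wl H d.+1 vs' ->
  wl G d vs = wl H d vs' /\
  perm_eq (map (Tup G d vs) (enum 'I_n)) (map (Tup H d vs') (enum 'I_n)).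
Proof. by case=> E1 /eq_seq_msetP E2; split. Qed.

Lemma Rel_step G H d vs u vs' u' p : Rel d.+1 G vs u H vs' u' ->
  perm_eq (map (Tup G d (nvs vs u p)) (enum 'I_n)) (map (Tup H d (nvs vs' u' p)) (enum 'I_n)) /\
  (forall v v', Tup G d (nvs vs u p) v = Tup H d (nvs vs' u' p) v' ->
     Rel d G (nvs vs u p) v H (nvs vs' u' p) v').
Proof.
case=> _ E2 E3.
have E : wl G d.+1 (nvs vs u p) = wl H d.+1 (nvs vs' u' p).
  by case: (ord_split p) => [->|[q pq]]; rewrite ?nvs_max ?(nvs_q _ _ pq).
have [E0 P] := wl_perm E; split => // v v' Et.
have Ea := congr1 fst Et; have Ef := congr1 snd Et.
split; [exact: Ea | exact: E0 | move=> i].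
by move/ffunP/(_ i): Ef; rewrite !ffunE.
Qed.

Lemma free_vars K (e : expr l) y : vars_in K e -> free e y -> 0 < y <= K.
Proof.
elim: e y => [i j|i j|i j|s i|a IHa b IHb|a IHa b IHb|c a IHa|p f args IH|x a IHa|F j a IHa|F i j a IHa] y /=;
  try by (move=> /andP[Hi Hj] /orP[]/eqP->).
- by move=> Hi /eqP->.
- by move=> /andP[Va Vb] /orP[/(IHa _ Va)|/(IHb _ Vb)].
- by move=> /andP[Va Vb] /orP[/(IHa _ Va)|/(IHb _ Vb)].
- by move=> Va /(IHa _ Va).
- by move=> /forallP Va /existsP[m Fm]; exact: (IH m _ (Va m) Fm).
- by move=> /andP[_ Va] /andP[_ /(IHa _ Va)].
- by move=> /andP[_ Va] /andP[_ /(IHa _ Va)].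
- by move=> /and3P[Hi _ _] /eqP->.
Qed.

Lemma depth_app p f (args : 'I_p -> expr l) m d :
  depth (EApp f args) <= d -> depth (args m) <= d.
Proof. by move=> D; apply: leq_trans D; exact: (leq_bigmax (F := fun m => depth (args m))). Qed.

Lemma tl_inv (e : expr l) : in_TL Omega Theta e -> vars_in k.+1 e -> forall d, depth e <= d ->
  forall G H vs u vs' u' (sigma : nat -> 'I_k.+1) nuG nuH,
  Rel d G vs u H vs' u' ->
  (forall x, free e x -> nuG x = ext vs u (sigma x) /\ nuH x = ext vs' u' (sigma x)) ->
  eval G nuG e = eval H nuH e.
Proof.
elim: e => [i j|i j|i j|s i|a IHa b IHb|a IHa b IHb|c a IHa|p f args IH|x a IHa|F j a IHa|F i j a IHa] /=.
- move=> _ _ d _ G H vs u vs' u' sigma nuG nuH [A _ _] Hf.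
  case: (Hf i) => [|Gi Hi]; first by rewrite eqxx. case: (Hf j) => [|Gj Hj]; first by rewrite eqxx orbT.
  by rewrite Gi Gj Hi Hj (proj1 (atp_eq A (sigma i) (sigma j))).
- move=> _ _ d _ G H vs u vs' u' sigma nuG nuH [A _ _] Hf.
  case: (Hf i) => [|Gi Hi]; first by rewrite eqxx. case: (Hf j) => [|Gj Hj]; first by rewrite eqxx orbT.
  by rewrite Gi Gj Hi Hj (proj1 (atp_eq A (sigma i) (sigma j))).
- move=> _ _ d _ G H vs u vs' u' sigma nuG nuH [A _ _] Hf.
  case: (Hf i) => [|Gi Hi]; first by rewrite eqxx. case: (Hf j) => [|Gj Hj]; first by rewrite eqxx orbT.
  by rewrite Gi Gj Hi Hj (proj2 (atp_eq A (sigma i) (sigma j))).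
- move=> _ _ d _ G H vs u vs' u' sigma nuG nuH [A _ _] Hf.
  case: (Hf i) => [|Gi Hi]; first by rewrite eqxx.
  by rewrite Gi Hi (atp_col A (sigma i)).
- move=> [Ia Ib] /andP[Va Vb] d; rewrite geq_max => /andP[Da Db] G H vs u vs' u' sigma nuG nuH HR Hf.
  congr Rmult; [apply: (IHa Ia Va d Da G H vs u vs' u' sigma) | apply: (IHb Ib Vb d Db G H vs u vs' u' sigma)] => //
    x Fx; apply: Hf; by rewrite Fx ?orbT.
- move=> [Ia Ib] /andP[Va Vb] d; rewrite geq_max => /andP[Da Db] G H vs u vs' u' sigma nuG nuH HR Hf.
  congr Rplus; [apply: (IHa Ia Va d Da G H vs u vs' u' sigma) | apply: (IHb Ib Vb d Db G H vs u vs' u' sigma)] => //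
    x Fx; apply: Hf; by rewrite Fx ?orbT.
- move=> Ia Va d Da G H vs u vs' u' sigma nuG nuH HR Hf.
  congr Rmult; apply: (IHa Ia Va d Da G H vs u vs' u' sigma) => //.
- move=> [_ Ia] /forallP Va d Da G H vs u vs' u' sigma nuG nuH HR Hf.
  congr f; apply: functional_extensionality => m.
  apply: (IH m (Ia m) (Va m) d (depth_app m Da) G H vs u vs' u' sigma) => // x Fx.
  by apply: Hf; apply/existsP; exists m.
- move=> Ia /andP[/andP[x0 xk] Va] [|d] // Da G H vs u vs' u' sigma nuG nuH HR Hf.
  set L := rem x (iota 1 k.+1).
  have sL : size L <= k by rewrite size_rem ?size_iota // mem_iota x0 add1n ltnS xk.
  have [p Hp] := pick_pos sigma sL.
  have [Pm Rs] := Rel_step p HR.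
  apply: sum_perm0; apply: (perm_rel0 _ Pm) => v v' Et.
  apply: (IHa Ia Va d Da G H _ v _ v' (fun y => sw p (if y == x then p else sigma y))); first exact: Rs.
  move=> y Fy; rewrite /upd; case: eqP => [_|yx].
    by rewrite !ext_nvs eqxx.
  have yL : y \in L.
    rewrite mem_rem_uniq ?iota_uniq // inE; apply/andP; split; first exact/eqP.
    by case/andP: (free_vars Va Fy) => y0 yk; rewrite mem_iota y0 add1n ltnS yk.
  have sy : sigma y != p by apply: contraNneq Hp => <-; exact: map_f.
  rewrite !ext_nvs (negbTE sy); apply: Hf; rewrite Fy andbT; exact/eqP.
- move=> [TF Ia] /andP[/andP[x0 xk] Va] [|d] // Da G H vs u vs' u' sigma nuG nuH HR Hf.
  set L := rem j (iota 1 k.+1).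
  have sL : size L <= k by rewrite size_rem ?size_iota // mem_iota x0 add1n ltnS xk.
  have [p Hp] := pick_pos sigma sL.
  have [Pm Rs] := Rel_step p HR.
  congr F; apply/eq_seq_msetP; apply: (perm_rel0 _ Pm) => v v' Et.
  apply: (IHa Ia Va d Da G H _ v _ v' (fun y => sw p (if y == j then p else sigma y))); first exact: Rs.
  move=> y Fy; rewrite /upd; case: eqP => [_|yx].
    by rewrite !ext_nvs eqxx.
  have yL : y \in L.
    rewrite mem_rem_uniq ?iota_uniq // inE; apply/andP; split; first exact/eqP.
    by case/andP: (free_vars Va Fy) => y0 yk; rewrite mem_iota y0 add1n ltnS yk.
  have sy : sigma y != p by apply: contraNneq Hp => <-; exact: map_f.
  rewrite !ext_nvs (negbTE sy); apply: Hf; rewrite Fy andbT; exact/eqP.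
- move=> [TF [Fa Ia]] /and3P[/andP[i0 ik] /andP[j0 jk] Va] [|d] // Da G H vs u vs' u' sigma nuG nuH HR Hf.
  case: (Hf i) => [|Gi Hi]; first by rewrite eqxx.
  have [p Hp] := pick_pos sigma (L := [:: i]) Hk.
  have si : sigma i != p by apply: contraNneq Hp => <-; rewrite /= inE eqxx.
  have [Pm Rs] := Rel_step p HR.
  congr F; apply/eq_seq_msetP; apply: (perm_rel _ Pm) => v v' Et.
  have HR' := Rs v v' Et; case: (HR') => A _ _.
  split.
    transitivity (adj G (ext (nvs vs u p) v (sw p (sigma i))) (ext (nvs vs u p) v (sw p p))).
      by rewrite !ext_nvs eqxx (negbTE si) Gi.
    by rewrite (proj2 (atp_eq A _ _)) !ext_nvs eqxx (negbTE si) Hi.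
  move=> _; apply: (IHa Ia Va d Da G H (nvs vs u p) v (nvs vs' u' p) v' (fun y => sw p (if y == j then p else sigma y))) => // y Fy.
  by rewrite (Fa y Fy) /upd eqxx !ext_nvs eqxx.
Qed.

End Inv.


Section Top.
Variables n l k : nat.
Hypothesis Hk : 0 < k.
Variable Omega : forall p : nat, (('I_p -> R) -> R) -> Prop.
Variable Theta : (rmset -> R) -> Prop.
Implicit Types (G H : graph n l).

Lemma one_var (e : expr l) x d : in_TL Omega Theta e -> vars_in k.+1 e -> depth e <= d ->
  (forall y, free e y -> y = x) ->
  forall G H v w nuG nuH, vwl G k d v = vwl H k d w -> nuG x = v -> nuH x = w ->
  eval G nuG e = eval H nuH e.
Proof.
move=> Ie Ve De Fe G H v w nuG nuH E Gv Hw.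
apply: (@tl_inv n l k Hk Omega Theta e Ie Ve d De G H [ffun _ => v] v [ffun _ => w] w
  (fun _ => ord0) nuG nuH).
  have A := wl_atp E.
  have C : col G v = col H w.
    by have := atp_col A (Ordinal Hk); rewrite !ffunE.
  split.
  - rewrite /atp; congr pair; apply/ffunP => z; rewrite !ffunE ?ext_const //.
    by case: ifP => // _; rewrite !eqxx !adj_irr.
  - exact: E.
  - move=> i.
    have -> : repl [ffun _ => v] v i = [ffun _ => v] by apply/ffunP => z; rewrite !ffunE; case: ifP.
    have -> : repl [ffun _ => w] w i = [ffun _ => w] by apply/ffunP => z; rewrite !ffunE; case: ifP.
    exact: E.
move=> y Fy; rewrite (Fe y Fy) Gv Hw !ext_const; done.
Qed.


Lemma gwl_perm G H d : gwl G k d = gwl H k d ->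
  perm_eq (map (vwl G k d) (enum 'I_n)) (map (vwl H k d) (enum 'I_n)).
Proof.
move/eq_seq_msetP => P.
pose o0 := Ordinal Hk.
pose isc (vs : {ffun 'I_k -> 'I_n}) := [forall i, vs i == vs o0].
have iscE vs : isc vs -> [ffun _ => vs o0] = vs.
  by move/forallP => Hc; apply/ffunP => i; rewrite ffunE (eqP (Hc i)).
have P2 := perm_rel (pG := isc) (pH := isc) (fG := fun vs => vwl G k d (vs o0))
  (fH := fun vs => vwl H k d (vs o0)) _ P.
have Hr : forall a b, wl G d a = wl H d b ->
    isc a = isc b /\ (isc a -> vwl G k d (a o0) = vwl H k d (b o0)).
  move=> a b E.
  have A := atp_eq (wl_atp E).
  have ab : isc a = isc b by apply: eq_forallb => i; exact: (proj1 (A i o0)).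
  split=> // ia.
  by rewrite /vwl iscE // iscE -?ab.
move: {P2}(P2 Hr); set S := filter isc _ => P2.
have Q : perm_eq (map (fun vs : {ffun 'I_k -> 'I_n} => vs o0) S) (enum 'I_n).
  apply: uniq_perm; [|exact: enum_uniq|].
  - have uS : uniq S by rewrite /S filter_uniq // enum_uniq.
    rewrite map_inj_in_uniq // => a b.
    rewrite !mem_filter => /andP[ia _] /andP[ib _] E.
    by rewrite -(iscE a ia) -(iscE b ib) E.
  - move=> v; rewrite mem_enum; apply/mapP; exists [ffun _ => v]; last by rewrite ffunE.
    by rewrite mem_filter mem_enum andbT; apply/forallP => i; rewrite !ffunE.
have P3 : perm_eq (map (vwl G k d) (map (fun vs : {ffun 'I_k -> 'I_n} => vs o0) S))
                  (map (vwl H k d) (map (fun vs : {ffun 'I_k -> 'I_n} => vs o0) S)) by rewrite -!map_comp.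
have QG := perm_map (vwl G k d) Q; have QH := perm_map (vwl H k d) Q.
rewrite perm_sym in QG.
exact: perm_trans QG (perm_trans P3 QH).
Qed.

Lemma closed_inv G H d :
  perm_eq (map (vwl G k d) (enum 'I_n)) (map (vwl H k d) (enum 'I_n)) ->
  forall e : expr l, in_TL Omega Theta e -> vars_in k.+1 e -> depth e <= d.+1 ->
  (forall x, ~~ free e x) -> forall nuG nuH, eval G nuG e = eval H nuH e.
Proof.
move=> P.
elim => [i j|i j|i j|s i|a IHa b IHb|a IHa b IHb|c a IHa|p f args IH|x a IHa|F j a IHa|F i j a IHa] /=;
  try by (move=> _ _ _ /(_ i); rewrite eqxx).
- move=> [Ia Ib] /andP[Va Vb]; rewrite geq_max => /andP[Da Db] Fr nuG nuH.
  by congr Rmult; [apply: IHa | apply: IHb] => // x; apply: contraNN (Fr x) => Fx; rewrite Fx ?orbT.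
- move=> [Ia Ib] /andP[Va Vb]; rewrite geq_max => /andP[Da Db] Fr nuG nuH.
  by congr Rplus; [apply: IHa | apply: IHb] => // x; apply: contraNN (Fr x) => Fx; rewrite Fx ?orbT.
- by move=> Ia Va Da Fr nuG nuH; congr Rmult; apply: IHa.
- move=> [_ Ia] /forallP Va Da Fr nuG nuH; congr f; apply: functional_extensionality => m.
  apply: IH => //; first exact: (depth_app m Da).
  by move=> x; apply: contraNN (Fr x) => Fx; apply/existsP; exists m.
- move=> Ia /andP[_ Va] Da Fr nuG nuH.
  have Fa y : free a y -> y = x.
    by move=> Fy; apply/eqP; apply: contraNT (Fr y) => yx; rewrite yx Fy.
  apply: sum_perm0; apply: (perm_rel0 _ P) => v v' E.
  by apply: (one_var Ia Va Da Fa E); rewrite /upd eqxx.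
- move=> [_ Ia] /andP[_ Va] Da Fr nuG nuH.
  have Fa y : free a y -> y = j.
    by move=> Fy; apply/eqP; apply: contraNT (Fr y) => yx; rewrite yx Fy.
  congr F; apply/eq_seq_msetP; apply: (perm_rel0 _ P) => v v' E.
  by apply: (one_var Ia Va Da Fa E); rewrite /upd eqxx.
Qed.

Lemma gtl_free i0 (e0 : expr l) : gtl Omega Theta i0 e0 -> free e0 i0.
Proof.
elim => /= [i _|i _|s i _|i a b _ IHa _ _|i a b _ IHa _ _|i c a _ IHa|i p f args p0 _ _ IH|i j a ij _ _|i j F a _ _ _ _];
  rewrite ?eqxx ?IHa //.
- by apply/existsP; exists (Ordinal p0); exact: IH.
- by rewrite andbT; case/orP: ij => /andP[/eqP-> /eqP->].
Qed.

Lemma eval_gsum G0 nu i j (a : expr l) : i != j ->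
  eval G0 nu (ESum j (EMul (@EE l i j) a)) =
  \big[Rplus/R0]_(v | adj G0 (nu i) v) eval G0 (upd nu j v) a.
Proof.
move=> ij; rewrite /= [RHS]big_mkcond /=; apply: eq_bigr => v _.
rewrite /upd eqxx (negbTE ij) /ind; case: adj => /=; [exact: Rmult_1_l | exact: Rmult_0_l].
Qed.

Lemma gtl_inv i0 (e0 : expr l) : gtl Omega Theta i0 e0 -> forall d, depth e0 <= d ->
  forall G H nuG nuH, cr G d (nuG i0) = cr H d (nuH i0) -> eval G nuG e0 = eval H nuH e0.
Proof.
elim => [i _|i _|s i _|i a b _ IHa _ IHb|i a b _ IHa _ IHb|i c a _ IHa|i p f args p0 _ _ IH|i j a ij _ IHa|i j F a ij _ _ IHa].
- by move=> d _ G H nuG nuH _ /=; rewrite !eqxx.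
- by move=> d _ G H nuG nuH _ /=; rewrite !eqxx.
- by move=> d _ G H nuG nuH E /=; rewrite (cr_col E).
- move=> d; rewrite /= geq_max => /andP[Da Db] G H nuG nuH E.
  by rewrite (IHa d Da G H nuG nuH E) (IHb d Db G H nuG nuH E).
- move=> d; rewrite /= geq_max => /andP[Da Db] G H nuG nuH E.
  by rewrite (IHa d Da G H nuG nuH E) (IHb d Db G H nuG nuH E).
- by move=> d Da G H nuG nuH E /=; rewrite (IHa d Da G H nuG nuH E).
- move=> d Da G H nuG nuH E /=; congr f; apply: functional_extensionality => m.
  exact: (IH m d (depth_app m Da) G H nuG nuH E).
- move=> [|d] // Da G H nuG nuH E.
  have Da' : depth a <= d by move: Da; rewrite /= max0n.
  case: E => _ /eq_seq_msetP P.
  have ij' : i != j by case/orP: ij => /andP[/eqP-> /eqP->].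
  rewrite !eval_gsum //; apply: sum_perm; apply: (perm_rel0 _ P) => v v' Ev.
  by apply: (IHa d Da' G H); rewrite /upd eqxx.
- move=> [|d] // Da G H nuG nuH E /=.
  case: E => _ /eq_seq_msetP P.
  congr F; apply/eq_seq_msetP; apply: (perm_rel0 _ P) => v v' Ev.
  by apply: (IHa d Da G H); rewrite /upd eqxx.
Qed.

End Top.


Theorem mainTheorem15 (n l : nat) (Hn : (0 < n)%N) (Hl : (0 < l)%N)
  (t k : nat) (Hk : (0 < k)%N)
  (Omega : forall p : nat, (('I_p -> R) -> R) -> Prop)
  (Theta : (rmset -> R) -> Prop) :
  (* (1) rho_1(cr^(t)) ⊆ rho_1(GTL_2^(t)(Omega, Theta)) *)
  (forall (G H : graph n l) (v w : 'I_n),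
     cr G t v = cr H t w ->
     rho1 (GTL2 Omega Theta t) G v H w) /\
  (* (2) rho_1(vwl_k^(t)) ⊆ rho_1(TL_{k+1}^(t)(Omega, Theta)) *)
  (forall (G H : graph n l) (v w : 'I_n),
     vwl G k t v = vwl H k t w ->
     rho1 (TL Omega Theta k.+1 t) G v H w) /\
  (* (3) rho_0(gwl_k^(t)) ⊆ rho_0(TL_{k+1}^(t+1)(Omega, Theta)) *)
  (forall (G H : graph n l),
     gwl G k t = gwl H k t ->
     rho0 (TL Omega Theta k.+1 t.+1) G H).
Proof.
split; [|split].
- move=> G H v w E phi [i [Gi Di]] Fr nuG nuH Gv Hw.
  have i1 := Fr i (gtl_free Gi); subst i.
  by apply: (gtl_inv Gi Di); rewrite Gv Hw.
- move=> G H v w E phi [Ip [Vp Dp]] Fr nuG nuH Gv Hw.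
  exact: (one_var Hk Ip Vp Dp Fr E Gv Hw).
- move=> G H E phi [Ip [Vp Dp]] Fr nuG nuH.
  have P := gwl_perm Hk E.
  exact: (@closed_inv n l k Hk Omega Theta G H t P phi Ip Vp Dp Fr nuG nuH).
Qed.
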